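(* Let $G$ be a compact Lie group with Lie algebra $\mathfrak g$ and bi-invariant metric $h_0$, and let $h$ be a left-invariant metric on $G$ with nonnegative sectional curvature. Then the unique inverse-linear path from $h_0$ to $h$ is infinitesimally nonnegative.
   Context: Write $\langle Z_1,Z_2\rangle=h_0(Z_1,Z_2)$ and $|Z|^2=\langle Z,Z\rangle$ for $Z_1,Z_2,Z\in\mathfrak g$. Every left-invariant metric $h$ on $G$ is determined by its restriction to $\mathfrak g$, and there is a unique $h_0$-self-adjoint positive definite endomorphism $\Phi\colon\mathfrak g\to\mathfrak g$ (the matrix of $h$) with $h(X,Y)=\langle \Phi X,Y\rangle$ for $X,Y\in\mathfrak g$. An inverse-linear path is a family $\Phi_t=(I-t\Psi)^{-1}$, where $\Psi\colon\mathfrak g\to\mathfrak g$ is $h_0$-self-adjoint; $h_t$ denotes the left-invariant metric with matrix $\Phi_t$, defined for $t$ in the open interval containing $0$ on which $I-t\Psi$ is positive definite. The unique inverse-linear path from $h_0$ to $h$ is the one with $\Phi_1=\Phi$, i.e. $\Psi=I-\Phi^{-1}$. For a left-invariant metric $h$ and $Z_1,Z_2\in\mathfrak g$, the unnormalized sectional curvature $k_h(Z_1,Z_2)=h(R_h(Z_1,Z_2)Z_2,Z_1)$ (not divided by $|Z_1\wedge Z_2|^2$); for $h_0$ it equals $\tfrac14|[Z_1,Z_2]|^2$. For fixed $X,Y\in\mathfrak g$, define $\kappa^\Psi(t)=k_{h_t}(\Phi_t^{-1}X,\Phi_t^{-1}Y)$ on the domain of $h_t$. The path (or $\Psi$) is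 infinitesimally nonnegative if for every $X,Y\in\mathfrak g$ there is $\varepsilon>0$ such that the associated function satisfies $\kappa^\Psi(t)\ge 0$ for all $t\in[0,\varepsilon)$. *)

(* Defs.v *)
From HB Require Import structures.
From mathcomp Require Import all_boot all_order all_algebra.
From mathcomp Require Import reals.
Set Implicit Arguments. Unset Strict Implicit. Unset Printing Implicit Defensive.
Import Order.TTheory GRing.Theory Num.Theory.
Local Open Scope ring_scope.

Section LieDefs.
Variables (R : realType) (n : nat).

(* The Lie algebra g is identified with column vectors 'cV[R]_n via an
   h_0-orthonormal basis, so h_0 is the standard inner product. *)
Definition ip (u v : 'cV[R]_n) : R := (u^T *m v) 0 0.

Definition is_lie_bracket (br : 'cV[R]_n -> 'cV[R]_n -> 'cV[R]_n) : Prop :=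
  (forall a x y z, br (a *: x + y) z = a *: br x z + br y z) /\
  (forall a x y z, br x (a *: y + z) = a *: br x y + br x z) /\
  (forall x, br x x = 0) /\
  (forall x y z, br x (br y z) + br y (br z x) + br z (br x y) = 0).

(* h_0 is ad-invariant (infinitesimal version of bi-invariance) *)
Definition ad_invariant (br : 'cV[R]_n -> 'cV[R]_n -> 'cV[R]_n) : Prop :=
  forall x y z, ip (br x y) z + ip y (br x z) = 0.

Definition self_adjoint (M : 'M[R]_n) : Prop := M^T = M.
Definition pos_def (M : 'M[R]_n) : Prop :=
  self_adjoint M /\ forall x : 'cV[R]_n, x != 0 -> 0 < ip x (M *m x).

Definition adm (br : 'cV[R]_n -> 'cV[R]_n -> 'cV[R]_n) (y : 'cV[R]_n) : 'M[R]_n :=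
  \matrix_(i, j) (br y (delta_mx j 0)) i 0.

(* Levi-Civita connection of the left-invariant metric with matrix Phi on
   left-invariant fields (Koszul formula):
   2 h(nabla_X Y, Z) = h([X,Y],Z) - h([Y,Z],X) + h([Z,X],Y). *)
Definition lc_nabla br (Phi : 'M[R]_n) (x y : 'cV[R]_n) : 'cV[R]_n :=
  (2%:R^-1) *: (invmx Phi *m
     (Phi *m br x y - (adm br y)^T *m (Phi *m x) - (adm br x)^T *m (Phi *m y))).

Definition curv br Phi (x y z : 'cV[R]_n) : 'cV[R]_n :=
  lc_nabla br Phi x (lc_nabla br Phi y z) - lc_nabla br Phi y (lc_nabla br Phi x z)
  - lc_nabla br Phi (br x y) z.

Definition sec_k br Phi (x y : 'cV[R]_n) : R := ip (Phi *m curv br Phi x y y) x.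

Definition nonneg_sec br Phi : Prop := forall x y, 0 <= sec_k br Phi x y.

Definition il_path (Psi : 'M[R]_n) (t : R) : 'M[R]_n := invmx (1%:M - t *: Psi).

Definition kappa br (Psi : 'M[R]_n) (x y : 'cV[R]_n) (t : R) : R :=
  sec_k br (il_path Psi t) ((1%:M - t *: Psi) *m x) ((1%:M - t *: Psi) *m y).

(* infinitesimally nonnegative: for all X Y there is eps > 0 such that for
   t in [0, eps), t lies in the domain of h_t and kappa(t) >= 0 *)
Definition inf_nonneg br (Psi : 'M[R]_n) : Prop :=
  forall x y : 'cV[R]_n, exists eps : R, 0 < eps /\
    forall t : R, 0 <= t -> t < eps ->
      pos_def (1%:M - t *: Psi) /\ 0 <= kappa br Psi x y t.

End LieDefs.

(* Main.v *)
Require Import Defs.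
From HB Require Import structures.
From mathcomp Require Import all_boot all_order all_algebra.
From mathcomp Require Import reals ring lra.
Import Order.TTheory GRing.Theory Num.Theory.
Local Open Scope ring_scope.
Set Implicit Arguments. Unset Strict Implicit. Unset Printing Implicit Defensive.

Section IP.
Variables (R : realType) (n : nat).
Implicit Types (u v w : 'cV[R]_n) (M : 'M[R]_n).

Lemma ipE u v : ip u v = \sum_i u i 0 * v i 0.
Proof. by rewrite /ip !mxE; apply: eq_bigr => i _; rewrite mxE. Qed.

Lemma ipC u v : ip u v = ip v u.
Proof. by rewrite !ipE; apply: eq_bigr => i _; rewrite mulrC. Qed.

Lemma ipDl u v w : ip (u + v) w = ip u w + ip v w.
Proof. by rewrite !ipE -big_split; apply: eq_bigr => i _; rewrite mxE mulrDl. Qed.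

Lemma ipZl a u v : ip (a *: u) v = a * ip u v.
Proof. by rewrite !ipE mulr_sumr; apply: eq_bigr => i _; rewrite mxE mulrA. Qed.

Lemma ipNl u v : ip (- u) v = - ip u v.
Proof. by rewrite !ipE -sumrN; apply: eq_bigr => i _; rewrite mxE mulNr. Qed.

Lemma ipBl u v w : ip (u - v) w = ip u w - ip v w.
Proof. by rewrite ipDl ipNl. Qed.

Lemma ip0l v : ip 0 v = 0.
Proof. by rewrite ipE big1 // => i _; rewrite mxE mul0r. Qed.

Lemma ipDr u v w : ip w (u + v) = ip w u + ip w v.
Proof. by rewrite ipC ipDl ![ip _ w]ipC. Qed.
Lemma ipZr a u v : ip v (a *: u) = a * ip v u.
Proof. by rewrite ipC ipZl ipC. Qed.
Lemma ipNr u v : ip v (- u) = - ip v u.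
Proof. by rewrite ipC ipNl ipC. Qed.
Lemma ipBr u v w : ip w (u - v) = ip w u - ip w v.
Proof. by rewrite ipDr ipNr. Qed.
Lemma ip0r v : ip v 0 = 0.
Proof. by rewrite ipC ip0l. Qed.

Lemma ipMl M u v : ip (M *m u) v = ip u (M^T *m v).
Proof. by rewrite /ip trmx_mul mulmxA. Qed.

Lemma ip_delta i v : ip (delta_mx i 0) v = v i 0.
Proof. by rewrite /ip trmx_delta -rowE mxE. Qed.

Lemma ip_ge0 u : 0 <= ip u u.
Proof. by rewrite ipE sumr_ge0 // => i _; rewrite -expr2 sqr_ge0. Qed.

Lemma ip_gt0 u : u != 0 -> 0 < ip u u.
Proof.
move=> nz; rewrite lt_neqAle ip_ge0 andbT eq_sym; apply/negP => /eqP H.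
move/negP: nz; apply; apply/eqP/matrixP => i j; rewrite (ord1 j) mxE.
rewrite ipE in H.
have H0 : forall k : 'I_n, true -> 0 <= u k 0 * u k 0 by move=> k _; rewrite -expr2 sqr_ge0.
have := psumr_eq0P H0 H (i:=i) isT.
by move/eqP; rewrite mulf_eq0 orbb => /eqP.
Qed.

Variable br : 'cV[R]_n -> 'cV[R]_n -> 'cV[R]_n.
Hypothesis Hlie : is_lie_bracket br.
Hypothesis Hinv : ad_invariant br.

Lemma brDl x y z : br (x + y) z = br x z + br y z.
Proof. by have [H1 _] := Hlie; have := H1 1 x y z; rewrite !scale1r. Qed.
Lemma brDr x y z : br z (x + y) = br z x + br z y.
Proof. by have [_ [H2 _]] := Hlie; have := H2 1 z x y; rewrite !scale1r. Qed.
Lemma br0l z : br 0 z = 0.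
Proof. by have := brDl 0 0 z; rewrite addr0 -{1}[br 0 z]addr0 => /addrI. Qed.
Lemma br0r z : br z 0 = 0.
Proof. by have := brDr 0 0 z; rewrite addr0 -{1}[br z 0]addr0 => /addrI. Qed.
Lemma brZl a x z : br (a *: x) z = a *: br x z.
Proof. by have [H1 _] := Hlie; have := H1 a x 0 z; rewrite !addr0 br0l addr0. Qed.
Lemma brZr a x z : br z (a *: x) = a *: br z x.
Proof. by have [_ [H2 _]] := Hlie; have := H2 a z x 0; rewrite !addr0 br0r addr0. Qed.
Lemma brNl x z : br (- x) z = - br x z.
Proof. by rewrite -scaleN1r brZl scaleN1r. Qed.
Lemma brNr x z : br z (- x) = - br z x.
Proof. by rewrite -scaleN1r brZr scaleN1r. Qed.
Lemma brBl x y z : br (x - y) z = br x z - br y z.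
Proof. by rewrite brDl brNl. Qed.
Lemma brBr x y z : br z (x - y) = br z x - br z y.
Proof. by rewrite brDr brNr. Qed.
Lemma brxx x : br x x = 0.
Proof. by have [_ [_ [H3 _]]] := Hlie. Qed.
Lemma brC x y : br y x = - br x y.
Proof.
have := brxx (x + y); rewrite brDl !brDr !brxx add0r addr0 => /eqP.
by rewrite addrC addr_eq0 => /eqP.
Qed.
Lemma jacobi x y z : br x (br y z) + br y (br z x) + br z (br x y) = 0.
Proof. by have [_ [_ [_ H4]]] := Hlie. Qed.
Lemma ip_brr x y z : ip (br x y) z = - ip y (br x z).
Proof. by apply/eqP; rewrite -addr_eq0; apply/eqP/Hinv. Qed.
Lemma ip_brl x y z : ip (br x y) z = ip x (br y z).
Proof. by rewrite brC ipNl ip_brr opprK. Qed.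

Lemma br_sum y (I : finType) (F : I -> 'cV[R]_n) :
  br y (\sum_i F i) = \sum_i br y (F i).
Proof. by apply: (big_morph (br y)) => [u v|]; rewrite ?brDr ?br0r. Qed.

Lemma adm_mul y x : adm br y *m x = br y x.
Proof.
apply/matrixP => i j; rewrite (ord1 j) !mxE.
have Hx : x = \sum_k x k 0 *: delta_mx k 0.
  apply/matrixP => a b; rewrite (ord1 b) summxE (bigD1 a) //= big1 ?addr0.
    by rewrite !mxE !eqxx mulr1.
  by move=> k /negbTE nk; rewrite !mxE eq_sym nk mulr0.
rewrite [in RHS]Hx br_sum summxE; apply: eq_bigr => k _.
by rewrite brZr !mxE mulrC.
Qed.

Lemma adm_tr y z : (adm br y)^T *m z = - br y z.
Proof.
apply/matrixP => i j; rewrite (ord1 j) !mxE.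
rewrite -(ip_delta i (br y z)) ipC ip_brr opprK ipE.
by apply: eq_bigr => k _; rewrite !mxE mulrC.
Qed.


Section Curv.
Variables (Phi M : 'M[R]_n).
Hypothesis Psym : Phi^T = Phi.
Hypothesis PU : Phi \in unitmx.
Hypothesis PM : invmx Phi = M.

Lemma Msym : M^T = M.
Proof. by rewrite -PM trmx_inv Psym. Qed.
Lemma PhiM : Phi *m M = 1%:M.
Proof. by rewrite -PM mulmxV. Qed.
Lemma PhiMv v : Phi *m (M *m v) = v.
Proof. by rewrite mulmxA PhiM mul1mx. Qed.
Lemma ipP a b : ip (Phi *m a) b = ip a (Phi *m b).
Proof. by rewrite ipMl Psym. Qed.
Lemma ipM a b : ip (M *m a) b = ip a (M *m b).
Proof. by rewrite ipMl Msym. Qed.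

Definition Nab Z W := 2^-1 *: (Phi *m br Z W + br W (Phi *m Z) + br Z (Phi *m W)).

Lemma PhinablaE Z W : Phi *m lc_nabla br Phi Z W = Nab Z W.
Proof.
rewrite /lc_nabla -scalemxAr PM PhiMv /Nab !adm_tr.
by rewrite !opprK.
Qed.
Lemma nablaE Z W : lc_nabla br Phi Z W = M *m Nab Z W.
Proof. by rewrite -PhinablaE -PM mulKmx. Qed.

Lemma NabVV V : Nab V V = br V (Phi *m V).
Proof.
rewrite /Nab brxx mulmx0 add0r -mulr2n -scaler_nat scalerA mulVf ?scale1r //.
by rewrite pnatr_eq0.
Qed.

Lemma NabU U W : ip (Nab U W) U = ip (br U W) (Phi *m U).
Proof.
rewrite /Nab ipZl !ipDl ipP [ip (br W _) _]ip_brr [ip (br U (Phi *m W)) _]ip_brr.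
rewrite brxx ip0r [br W U]brC ipNr opprK [ip (Phi *m U) _]ipC.
by rewrite subr0; field.
Qed.

Lemma NabV U V W : ip (Nab V W) U = 2^-1 * (- ip W (br V (Phi *m U))
   + ip W (br (Phi *m V) U) + ip (Phi *m W) (br U V)).
Proof.
rewrite /Nab ipZl !ipDl ipP ip_brr [ip (br W _) _]ip_brl [ip (br V (Phi *m W)) _]ip_brr.
by rewrite [br V U]brC ipNr opprK.
Qed.

Lemma NabZ U V Z : ip (Nab Z V) U = 2^-1 * (ip Z (br V (Phi *m U))
   + ip (Phi *m Z) (br U V) - ip Z (br U (Phi *m V))).
Proof.
rewrite /Nab ipZl !ipDl ipP ip_brl [ip (br V _) _]ip_brr [ip (br Z (Phi *m V)) _]ip_brl.
by rewrite [br V U]brC [br (Phi *m V) U]brC !ipNr !opprK.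
Qed.

Local Opaque lc_nabla invmx ip.
Lemma secK_raw U V : sec_k br Phi U V = ip (Nab U (lc_nabla br Phi V V)) U
  - ip (Nab V (lc_nabla br Phi U V)) U - ip (Nab (br U V) V) U.
Proof. rewrite /sec_k /curv !mulmxBr -!PhinablaE. by rewrite !ipBl. Qed.

Lemma secK X Y U V : Phi *m U = X -> Phi *m V = Y ->
  sec_k br Phi U V = - ip (br V Y) (M *m br U X)
     + 4^-1 * ip (br V X + br U Y) (M *m (br V X + br U Y))
     - 3 / 4 * ip (Phi *m br U V) (br U V) - 2^-1 * ip (br U V) (br V X - br U Y).
Proof.
move=> hX hY.
rewrite secK_raw (NabU U) (NabV U V) (NabZ U V (br U V)) !nablaE NabVV !PhiMv hX hY.
rewrite [ip (br U _) X]ip_brr !ipM [br Y U]brC /Nab hX hY.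
rewrite mulmxN !mulmxDr !ipZl !ipDl !ipDr !ipNr ?ipBr !ipP !PhiMv.
rewrite [ip (br U Y) (M *m br V X)]ipC ipM.
rewrite [ip (br V X) (br U V)]ipC [ip (br U Y) (br U V)]ipC.
by field.
Qed.
End Curv.

Lemma ipBsym (B : 'M[R]_n) a b : B^T = B -> ip a (B *m b) = ip b (B *m a).
Proof. by move=> hB; rewrite ipC ipMl hB. Qed.

Lemma mulmxZ (A : 'M[R]_n) a (v : 'cV[R]_n) : A *m (a *: v) = a *: (A *m v).
Proof. by rewrite scalemxAr. Qed.

Lemma jac_ip x y X' Y' :
  ip (br x y) (br X' Y') = ip (br Y' y) (br X' x) - ip (br X' y) (br Y' x).
Proof.
have := congr1 (ip X') (jacobi Y' x y).
have e1 : ip X' (br Y' (br x y)) = ip (br x y) (br X' Y') by rewrite -ip_brl ipC.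
have e2 : ip X' (br x (br y Y')) = - ip (br Y' y) (br X' x).
  by rewrite -ip_brl [br y Y']brC ipNr ipC.
have e3 : ip X' (br y (br Y' x)) = ip (br X' y) (br Y' x) by rewrite -ip_brl.
rewrite ip0r !ipDr e1 e2 e3 => J; lra.
Qed.

Lemma key (t c : R) (B : 'M[R]_n) (x y X' Y' q s w p : 'cV[R]_n) :
  B^T = B -> c = 1 - t ->
  w = t *: q - t *: (br X' y + br x Y') - c *: br x y ->
  p = t *: q - c *: s ->
  ip s (br (x - t *: (x - X')) (y - t *: (y - Y'))) = t * ip w q - c * ip w s ->
  let U := x - t *: (x - X') in let V := y - t *: (y - Y') in
  let AP := br V x + br U y in
  - ip (br V y) (br U x - t *: (br U x - B *m br U x))
  + 4^-1 * ip AP (AP - t *: (AP - B *m AP))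
  - 3 / 4 * ip p (br U V) - 2^-1 * ip (br U V) (br V x - br U y)
  = t ^+ 3 * (- ip (br Y' y) (B *m br X' x)
     + 4^-1 * ip (br Y' x + br X' y) (B *m (br Y' x + br X' y))
     - 3 / 4 * ip q (br X' Y') - 2^-1 * ip (br X' Y') (br Y' x - br X' y))
   + 4^-1 * c ^+ 3 * ip (br x y) (br x y) + 3 / 4 * c * (ip w w - c * ip s w).
Proof.
move=> hB hc hw hp hs U V AP.
rewrite /AP /U /V hp ipBl !ipZl hs hw.
rewrite !(brDl, brDr, brBl, brBr, brZl, brZr, brNl, brNr, brxx).
rewrite ?(mulmxDr, mulmxBr, mulmxN, mulmx0, mulmxZ).
rewrite ?[br y x]brC ?[br x Y']brC ?(brNl, brNr, mulmxN, opprK).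
rewrite !(ipDl, ipDr, ipBl, ipBr, ipZl, ipZr, ipNl, ipNr, ip0l, ip0r).
rewrite ?[ip (br X' y) (br x y)]ipC ?[ip (br X' y) (B *m (br x y))](ipBsym _ _ hB).
rewrite ?[ip (br Y' x) (br x y)]ipC ?[ip (br Y' x) (B *m (br x y))](ipBsym _ _ hB).
rewrite ?[ip (br X' Y') (br x y)]ipC ?[ip (br X' Y') (B *m (br x y))](ipBsym _ _ hB).
rewrite ?[ip (br Y' y) (br x y)]ipC ?[ip (br Y' y) (B *m (br x y))](ipBsym _ _ hB).
rewrite ?[ip (br X' x) (br x y)]ipC ?[ip (br X' x) (B *m (br x y))](ipBsym _ _ hB).
rewrite ?[ip (q) (br x y)]ipC ?[ip (q) (B *m (br x y))](ipBsym _ _ hB).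
rewrite ?[ip (s) (br x y)]ipC ?[ip (s) (B *m (br x y))](ipBsym _ _ hB).
rewrite ?[ip (br Y' x) (br X' y)]ipC ?[ip (br Y' x) (B *m (br X' y))](ipBsym _ _ hB).
rewrite ?[ip (br X' Y') (br X' y)]ipC ?[ip (br X' Y') (B *m (br X' y))](ipBsym _ _ hB).
rewrite ?[ip (br Y' y) (br X' y)]ipC ?[ip (br Y' y) (B *m (br X' y))](ipBsym _ _ hB).
rewrite ?[ip (br X' x) (br X' y)]ipC ?[ip (br X' x) (B *m (br X' y))](ipBsym _ _ hB).
rewrite ?[ip (q) (br X' y)]ipC ?[ip (q) (B *m (br X' y))](ipBsym _ _ hB).
rewrite ?[ip (s) (br X' y)]ipC ?[ip (s) (B *m (br X' y))](ipBsym _ _ hB).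
rewrite ?[ip (br X' Y') (br Y' x)]ipC ?[ip (br X' Y') (B *m (br Y' x))](ipBsym _ _ hB).
rewrite ?[ip (br Y' y) (br Y' x)]ipC ?[ip (br Y' y) (B *m (br Y' x))](ipBsym _ _ hB).
rewrite ?[ip (br X' x) (br Y' x)]ipC ?[ip (br X' x) (B *m (br Y' x))](ipBsym _ _ hB).
rewrite ?[ip (q) (br Y' x)]ipC ?[ip (q) (B *m (br Y' x))](ipBsym _ _ hB).
rewrite ?[ip (s) (br Y' x)]ipC ?[ip (s) (B *m (br Y' x))](ipBsym _ _ hB).
rewrite ?[ip (br Y' y) (br X' Y')]ipC ?[ip (br Y' y) (B *m (br X' Y'))](ipBsym _ _ hB).
rewrite ?[ip (br X' x) (br X' Y')]ipC ?[ip (br X' x) (B *m (br X' Y'))](ipBsym _ _ hB).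
rewrite ?[ip (q) (br X' Y')]ipC ?[ip (q) (B *m (br X' Y'))](ipBsym _ _ hB).
rewrite ?[ip (s) (br X' Y')]ipC ?[ip (s) (B *m (br X' Y'))](ipBsym _ _ hB).
rewrite ?[ip (br X' x) (br Y' y)]ipC ?[ip (br X' x) (B *m (br Y' y))](ipBsym _ _ hB).
rewrite ?[ip (q) (br Y' y)]ipC ?[ip (q) (B *m (br Y' y))](ipBsym _ _ hB).
rewrite ?[ip (s) (br Y' y)]ipC ?[ip (s) (B *m (br Y' y))](ipBsym _ _ hB).
rewrite ?[ip (q) (br X' x)]ipC ?[ip (q) (B *m (br X' x))](ipBsym _ _ hB).
rewrite ?[ip (s) (br X' x)]ipC ?[ip (s) (B *m (br X' x))](ipBsym _ _ hB).
rewrite ?[ip (s) (q)]ipC ?[ip (s) (B *m (q))](ipBsym _ _ hB).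
rewrite ?(jac_ip x y X' Y') hc.
by field.
Qed.
End IP.

Unset Implicit Arguments.

Lemma posdef_unit {R : realType} {n} {A : 'M[R]_n} : pos_def A -> A \in unitmx.
Proof.
move=> [hs hp]; rewrite unitmxE unitfE; apply/negP => /det0P [v nz vA].
have := hp v^T; rewrite trmx_eq0 => /(_ nz).
have -> : A *m v^T = 0 by rewrite -hs -trmx_mul vA trmx0.
by rewrite ip0r ltxx.
Qed.

Lemma vec_eq {R : realType} {n} {u v : 'cV[R]_n} : (forall z, ip u z = ip v z) -> u = v.
Proof.
move=> H; apply/matrixP => i j; rewrite (ord1 j).
by rewrite -!ip_delta ipC H ipC.
Qed.

Theorem mainTheorem1 (R : realType) (n : nat)
    (br : 'cV[R]_n -> 'cV[R]_n -> 'cV[R]_n) (Phi : 'M[R]_n) :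
  is_lie_bracket br -> ad_invariant br ->
  pos_def Phi -> nonneg_sec br Phi ->
  inf_nonneg br (1%:M - invmx Phi).
Proof.
move=> hlie hinv hpd hsec.
have PU := posdef_unit hpd.
have [Psym Ppos] := hpd.
have {}Psym : Phi^T = Phi := Psym.
move=> x y; exists 1; split; first exact: ltr01.
move=> t t0 t1.
rewrite /kappa /il_path.
move hB: (invmx Phi) => B.
have Bsym : B^T = B by rewrite -hB trmx_inv Psym.
have BU : B \in unitmx by rewrite -hB unitmx_inv.
have PB (v : 'cV[R]_n) : Phi *m (B *m v) = v by rewrite -hB mulKVmx.
have BP (v : 'cV[R]_n) : B *m (Phi *m v) = v by rewrite -hB mulKmx.
have Bpsd (v : 'cV[R]_n) : 0 <= ip v (B *m v).
  have [->|nz] := eqVneq (B *m v) 0; first by rewrite ip0r.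
  by rewrite -{1}(PB v) ipMl Psym; apply/ltW/Ppos.
move hA: (1%:M - t *: (1%:M - B)) => A.
have Av (v : 'cV[R]_n) : A *m v = v - t *: (v - B *m v).
  by rewrite -hA mulmxBl mul1mx -scalemxAl mulmxBl mul1mx.
have Asym : A^T = A.
  by rewrite -hA linearB /= trmx1 linearZ /= linearB /= trmx1 Bsym.
have Apd : pos_def A.
  split => // v nz; rewrite Av ipBr ipZr ipBr.
  have := ip_gt0 nz; have := Bpsd v; nra.
have AU := posdef_unit Apd.
split => //.
move hAi: (invmx A) => Ai.
have AiSym : Ai^T = Ai by rewrite -hAi trmx_inv Asym.
have AiU : Ai \in unitmx by rewrite -hAi unitmx_inv.
have AiInv : invmx Ai = A by rewrite -hAi invmxK.
have AiA (v : 'cV[R]_n) : Ai *m (A *m v) = v by rewrite -hAi mulKmx.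
have AAi (v : 'cV[R]_n) : A *m (Ai *m v) = v by rewrite -hAi mulKVmx.
rewrite (secK hlie hinv AiSym AiU AiInv (AiA x) (AiA y)).
have [c hc] : exists c, c = 1 - t by eexists.
have [q hq] : exists q, q = Phi *m br (B *m x) (B *m y) by eexists.
have [w hw] : exists w, w = t *: q - t *: (br (B *m x) y + br x (B *m y)) - c *: br x y
  by eexists.
have [s hs] : exists s, s = Ai *m w by eexists.
have As : A *m s = w by rewrite hs AAi.
have BQ : B *m q = br (B *m x) (B *m y) by rewrite hq BP.
have hC : br (A *m x) (A *m y) = A *m (t *: q - c *: s).
  rewrite mulmxBr !mulmxZ As (Av q) BQ hw hc; apply: vec_eq => z.
  rewrite !Av.
  rewrite !(brDl hlie, brDr hlie, brBl hlie, brBr hlie, brZl hlie, brZr hlie, brNl hlie, brNr hlie).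
  rewrite !(ipDl, ipBl, ipZl, ipNl).
  ring.
have hp : Ai *m br (A *m x) (A *m y) = t *: q - c *: s by rewrite hC AiA.
have hs0 : ip s (br (A *m x) (A *m y)) = t * ip w q - c * ip w s.
  rewrite hC ipC ipMl Asym As !ipBl !ipZl; congr (_ * _ - _ * _); apply: ipC.
rewrite hp; rewrite !Av in hs0; rewrite !Av.
move: (key hlie hinv Bsym hc hw (erefl _) hs0) => /= ->.
have kB := hsec (B *m x) (B *m y).
rewrite /nonneg_sec (secK hlie hinv Psym PU hB (PB x) (PB y)) -hq in kB.
have hD : ip w w - c * ip s w = t * c * ip s (B *m s) + t ^+ 2 * ip (B *m s) (B *m s).
  rewrite -As Av !(ipBl, ipBr, ipZl, ipZr) [ip (B *m s) s]ipC hc; ring.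
rewrite hD.
have c0 : 0 <= c by rewrite hc subr_ge0 ltW.
have S0 := Bpsd s.
have T0 := ip_ge0 (B *m s).
have F0 := ip_ge0 (br x y).
apply: addr_ge0; first apply: addr_ge0.
- by apply: mulr_ge0; [exact: exprn_ge0 | exact: kB].
- by apply: mulr_ge0 => //; apply: mulr_ge0; [lra | exact: exprn_ge0].
- apply: mulr_ge0; first by apply: mulr_ge0 => //; lra.
  apply: addr_ge0; apply: mulr_ge0 => //; first by apply: mulr_ge0.
  exact: exprn_ge0.
Qed.
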